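(* Consider the following percolation on $[L]\times\{0,1,2,\dots\}$: the edges joining $(i,0)$ and $(i+1,0)$ are open for all $i$; if $(i,t)$ belongs to an open edge, then with probability at least $0.99$ the edges joining $(i,t)$ to $(i,t+1)$ and to $(i\pm1,t+1)$ are all open, these events occurring independently. Then with probability tending to $1$ as $L\to\infty$, the percolation reaches time $1.01^L$: there exists a path of open edges connecting some vertex $(i,0)$ and some vertex $(j,1.01^L)$ with $i,j\in[L]$. *)

(* Defs.v *)
From mathcomp Require Import all_boot all_order all_algebra.
From mathcomp Require Import all_classical all_reals all_analysis.
Set Implicit Arguments. Unset Strict Implicit. Unset Printing Implicit Defensive.
Import Order.TTheory GRing.Theory Num.Theory.
Local Open Scope classical_set_scope.
Local Open Scope ring_scope.

Definition mutually_independent d (T : measurableType d) (R : realType)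
  (P : probability T R) (I : eqType) (A : I -> set T) : Prop :=
  forall s : seq I, uniq s ->
    P (\big[setI/setT]_(k <- s) A k) = (\prod_(k <- s) fine (P (A k)))%:E.

(* Vertices of [L] x {0,1,2,...}; [L] is represented by 'I_L = {0,...,L-1}. *)
Definition vertex (L : nat) := ('I_L * nat)%type.

Definition near1 (L : nat) (i j : 'I_L) : bool :=
  (nat_of_ord i <= (nat_of_ord j).+1)%N && (nat_of_ord j <= (nat_of_ord i).+1)%N.

(* The percolation driven by the events A i t (the "good" event at (i,t)):
   [incident A w i t] means that in outcome w the vertex (i,t) belongs to an
   open edge.  At time 0 this holds iff there is a horizontal edge, i.e.
   L >= 2.  At time t+1 it holds iff some upward edge from (i',t), |i-i'|<=1,
   is open, and such an edge is open iff (i',t) belongs to an open edge and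
   the event A i' t occurs. *)
Fixpoint incident (T : Type) (L : nat) (A : 'I_L -> nat -> set T) (w : T)
    (i : 'I_L) (t : nat) : Prop :=
  match t with
  | 0 => (1 < L)%N
  | t'.+1 => exists i' : 'I_L, near1 i' i /\ incident A w i' t' /\ A i' t' w
  end.

Definition open_up (T : Type) (L : nat) (A : 'I_L -> nat -> set T) (w : T)
    (i : 'I_L) (t : nat) (i' : 'I_L) : Prop :=
  near1 i i' /\ incident A w i t /\ A i t w.

Definition open_edge (T : Type) (L : nat) (A : 'I_L -> nat -> set T) (w : T)
    (u v : vertex L) : Prop :=
  (u.2 = 0%N /\ v.2 = 0%N /\
     ((nat_of_ord u.1).+1 = nat_of_ord v.1 \/ (nat_of_ord v.1).+1 = nat_of_ord u.1))
  \/ (v.2 = u.2.+1 /\ open_up A w u.1 u.2 v.1)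
  \/ (u.2 = v.2.+1 /\ open_up A w v.1 v.2 u.1).

(* A path is x = x_0, x_1, ..., x_n
   given as x :: s, with consecutive vertices joined by open edges. *)
Definition reaches (R : realType) (T : Type) (L : nat)
    (A : 'I_L -> nat -> set T) : set T :=
  [set w | exists (x : vertex L) (s : seq (vertex L)),
     x.2 = 0%N /\
     ((101 / 100 : R) ^+ L <= ((last x s).2)%:R) /\
     (forall k : nat, (k < size s)%N ->
        open_edge A w (nth x (x :: s) k) (nth x s k))].

(* Main.v *)
Require Import Defs.
From mathcomp Require Import all_boot all_order all_algebra.
From mathcomp Require Import all_classical all_reals all_analysis.
From mathcomp Require Import zify ring lra.
From Stdlib Require Import Classical.
Import Order.TTheory GRing.Theory Num.Theory.
Set Implicit Arguments. Unset Strict Implicit. Unset Printing Implicit Defensive.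


Section Witness.
Variable L : nat.
Variables alive good : nat -> nat -> Prop.
Definition wreal x := (0 < x) && (x <= L).
Definition wop y s := wreal y /\ alive y s /\ good y s.
Definition wdead x s := wreal x /\ ~ alive x s.
Hypothesis H0 : forall x, wreal x -> alive x 0.
Hypothesis Hstep : forall x s, wreal x -> alive x s.+1 <->
  exists y, [/\ wreal y, y <= x.+1, x <= y.+1, alive y s & good y s].

Definition wlegal (v w : nat * nat) := w.1 + (w.2 - v.2) + (v.2 - w.2) <= v.1.+1.
Definition wFC t p f := wlegal (p.-1, t) f \/ [/\ p = 1, f.1 = 1 & ~ alive 1 t].
Definition wLC t r l := wlegal l (r.+1, t) \/ [/\ r = L, l.1 = L & ~ alive L t].
Definition sameord (u v : nat*nat) := (u.2 == v.2) ==> (u.1 < v.1).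
Definition wLip t (pi : nat -> nat) := (forall s, s < t -> wop (pi s) s) /\
  (forall s, s.+1 < t -> pi s.+1 <= (pi s).+1 /\ pi s <= (pi s.+1).+1).

Definition WSpec t p r (W : seq (nat*nat)) :=
  [/\ W <> [::],
   forall v, v \in W -> [/\ wreal v.1, v.2 <= t, ~ good v.1 v.2,
                          p <= v.1 + (t - v.2) & v.1 <= r + (t - v.2)],
   wFC t p (head (0,0) W) /\ wLC t r (last (0,0) W),
   sorted wlegal W /\ pairwise sameord W &
   forall pi, 0 < t -> wLip t pi ->
     (r <= pi t.-1 -> forall v, v \in W -> v.2 < t -> v.1 < pi v.2) /\
     (pi t.-1 <= p.+1 -> forall v, v \in W -> v.2 < t -> pi v.2 < v.1)].

Definition WSpecE t p r W := (W = [::] /\ r < p) \/ WSpec t p r W.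

Lemma dead_cover x s y : wdead x s.+1 -> y <= x.+1 -> x <= y.+1 -> ~ wop y s.
Proof.
case=> rx nal h1 h2 [ry [al g]]; apply: nal; apply/Hstep => //.
by exists y; split.
Qed.

Lemma alive_nb x s : wreal x -> alive x s.+1 ->
  exists y, [/\ wop y s, y <= x.+1 & x <= y.+1].
Proof.
move=> rx /(Hstep _ rx) [y [ry h1 h2 al g]]; exists y; split => //.
Qed.

Lemma path_pi g t : wreal g -> alive g t.+1 ->
  exists pi, [/\ wLip t.+1 pi, pi t <= g.+1 & g <= (pi t).+1].
Proof.
elim: t g => [|t IH] g rg ag.
  have [y [opy h1 h2]] := alive_nb rg ag.
  exists (fun _ => y); split => //; split.
    by move=> s; rewrite ltnS leqn0 => /eqP ->.
  by move=> s; rewrite ltnS ltn0.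
have [y [opy h1 h2]] := alive_nb rg ag.
have [ry [aly gy]] := opy.
have [pi [[Lop Llip] p1 p2]] := IH y ry aly.
exists (fun s => if s <= t then pi s else y); split; last 2 first.
- by rewrite ltnn.
- by rewrite ltnn.
split.
  move=> s; rewrite ltnS; case: ifP => hs hs'; first by apply: Lop; rewrite ltnS.
  by have -> : s = t.+1 by lia.
move=> s hs; case: (leqP s.+1 t) => h.
- have h' : s <= t by lia.
  rewrite h'; apply: Llip; lia.
- have e : s = t by lia.
  subst s; rewrite leqnn /=.
  split; lia.
Qed.


Lemma consBad t p r W : 0 < p -> p <= r -> r <= L -> alive p t -> ~ good p t ->
  WSpecE t p.+1 r W -> WSpec t p r ((p,t) :: W).
Proof.
move=> p0 pr rL ap gp [[-> hr] | [Wne Wsites [Wfc Wlc] [Wsort Wpw] Winv]].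
  have e : r = p by lia.
  subst r; split => //.
  - move=> v; rewrite inE => /eqP -> /=; split => //; rewrite /wreal; lia.
  - split; left; rewrite /wlegal /=; lia.
  - move=> pi t0 Lp; split=> _ v; rewrite inE => /eqP -> /=; lia.
case: W Wne Wsites Wfc Wlc Wsort Wpw Winv => [//|w W'] _ Wsites Wfc Wlc Wsort Wpw Winv.
split => //.
- move=> v; rewrite inE => /predU1P [-> /= | vW].
    split => //; rewrite /wreal; lia.
  have [? ? ? ? ?] := Wsites v vW; split => //; lia.
- split => //; left; rewrite /wlegal /=; lia.
- split; last first.
    apply/andP; split; last exact: Wpw.
    apply/allP => v vW; rewrite /sameord /=.
    apply/implyP => /eqP e; have [_ _ _ hc _] := Wsites v vW; by rewrite -e subnn addn0 in hc.
  apply/andP; split; last exact: Wsort.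
  case: Wfc => [//|[]]; lia.
- move=> pi t0 Lp; have [WR WL] := Winv pi t0 Lp; split.
    move=> hr v; rewrite inE => /predU1P [-> /= | vW]; [lia | exact: WR].
  move=> hl v; rewrite inE => /predU1P [-> /= | vW]; [lia |].
  by apply: WL => //; lia.
Qed.

Lemma run_end t p r : p <= r -> wdead p t -> exists b, [/\ p <= b <= r,
  forall x, p <= x <= b -> wdead x t & b = r \/ (b < r /\ ~ wdead b.+1 t)].
Proof.
move: {2}(r - p) (leqnn (r - p)) => n; elim: n p => [|n IH] p hn pr dp.
  exists p; split => //; [lia| |left; lia].
  by move=> x hx; have -> : x = p by lia.
case: (ltngtP p r) => h; last by exists p; split => //; [lia| move=> x hx; have -> : x = p by lia | left].
- case: (classic (wdead p.+1 t)) => dp1.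
    have [b [hb hd hr]] := IH p.+1 ltac:(lia) h dp1.
    exists b; split => //; first lia.
    move=> x hx; case: (ltngtP x p) => hxp; [lia| |by rewrite hxp].
    apply: hd; lia.
  exists p; split => //; [lia| |by right].
  by move=> x hx; have -> : x = p by lia.
- lia.
Qed.

Section Run.
Variables (t' p b : nat).
Hypothesis p0 : 0 < p.
Hypothesis pb : p <= b.
Hypothesis bL : b <= L.
Hypothesis hdead : forall x, p <= x <= b -> wdead x t'.+1.
Hypothesis LB : p = 1 \/ alive p.-1 t'.+1.
Hypothesis Zc : forall x, maxn 1 p.-1 <= x <= minn L b.+1 -> ~ wop x t'.

Lemma Zc_out y : wop y t' -> y < maxn 1 p.-1 \/ minn L b.+1 < y.
Proof.
move=> opy; case: (leqP (maxn 1 p.-1) y) => h1; last by left.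
case: (leqP y (minn L b.+1)) => h2; last by right.
by case: (Zc (x:=y)) => //; rewrite h1 h2.
Qed.

Lemma op_real y s : wop y s -> wreal y.
Proof. by case. Qed.

Lemma fc_up f : wreal f.1 -> wFC t' (maxn 1 p.-1) f -> wFC t'.+1 p f.
Proof.
move=> rf hf; have [e1|p2] : p = 1 \/ 1 < p by lia.
  subst p; right; split => //.
    case: hf => [|[]//]; rewrite /wlegal /=; move: rf; rewrite /wreal; lia.
  by case: (hdead (x:=1)) => //; lia.
case: LB => [?|al]; first lia.
have rp1 : wreal p.-1 by rewrite /wreal; lia.
have [y [opy h1 h2]] := alive_nb rp1 al.
have := op_real opy; rewrite /wreal => ry.
case: (Zc_out opy) => hy; last by lia.
case: hf => [hl | [e _ _]]; last by lia.
by left; move: hl; rewrite /wlegal /=; lia.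
Qed.

Lemma lc_mid l : b < L -> alive b.+1 t'.+1 -> wLC t' (minn L b.+1) l ->
  wlegal l (b.+1, t'.+1).
Proof.
move=> bL' al hl.
have rb1 : wreal b.+1 by rewrite /wreal; lia.
have [y [opy h1 h2]] := alive_nb rb1 al.
have := op_real opy; rewrite /wreal => ry.
case: (Zc_out opy) => hy; first by lia.
case: hl => [hl | [e _ _]]; last by lia.
by move: hl; rewrite /wlegal /=; lia.
Qed.

Lemma lc_end l r : b = r -> (r = L \/ alive r.+1 t'.+1) -> wreal l.1 ->
  wLC t' (minn L b.+1) l -> wLC t'.+1 r l.
Proof.
move=> br RB rl hl.
have [rL | rLn] : r = L \/ r < L by lia.
  subst; right; split => //.
    case: hl => [|[]//]; rewrite /wlegal /=; move: rl; rewrite /wreal; lia.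
  by case: (hdead (x:=L)) => //; lia.
case: RB => [?|al]; first lia.
left; rewrite -br; apply: (lc_mid (l:=l)) => //; [lia | by rewrite br].
Qed.

Variable WR : seq (nat*nat).
Hypothesis WRspec : WSpec t' (maxn 1 p.-1) (minn L b.+1) WR.

Lemma Lip_le t u pi : u <= t -> wLip t pi -> wLip u pi.
Proof.
move=> ut [h1 h2]; split => s hs; [apply: h1 | apply: h2]; lia.
Qed.

Lemma invR_up pi : wLip t'.+1 pi -> b <= pi t' ->
  forall v, v \in WR -> v.2 < t'.+1 -> v.1 < pi v.2.
Proof.
move=> Lp hb v vW hv.
have [Lop Llip] := Lp.
have [_ WRs _ _ WRinv] := WRspec.
have opt := Lop t' (ltnSn t').
have hr : minn L b.+1 < pi t' by case: (Zc_out opt) => h; lia.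
have [vr v2 _ _ c2] := WRs v vW.
have [e|lt] : v.2 = t' \/ v.2 < t' by lia.
  by rewrite e; rewrite e subnn addn0 in c2; lia.
have t0 : 0 < t' by lia.
have [WRr _] := WRinv pi t0 (Lip_le (leqnSn t') Lp).
apply: WRr => //.
have := Llip t'.-1; rewrite prednK //; lia.
Qed.

Lemma invL_up pi : wLip t'.+1 pi -> pi t' <= p.+1 ->
  forall v, v \in WR -> v.2 < t'.+1 -> pi v.2 < v.1.
Proof.
move=> Lp hb v vW hv.
have [Lop Llip] := Lp.
have [_ WRs _ _ WRinv] := WRspec.
have opt := Lop t' (ltnSn t').
have := op_real opt; rewrite /wreal => rpt.
have hr : pi t' < maxn 1 p.-1 by case: (Zc_out opt) => h; lia.
have [vr v2 _ c1 _] := WRs v vW.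
have [e|lt] : v.2 = t' \/ v.2 < t' by lia.
  by rewrite e; rewrite e subnn addn0 in c1; lia.
have t0 : 0 < t' by lia.
have [_ WRl] := WRinv pi t0 (Lip_le (leqnSn t') Lp).
apply: WRl => //.
have := Llip t'.-1; rewrite prednK //; lia.
Qed.

Lemma appendRun r Wrest : b <= r -> r <= L ->
  (b = r /\ (r = L \/ alive r.+1 t'.+1) /\ Wrest = [::]) \/
  [/\ b < r, alive b.+1 t'.+1, head (0,0) Wrest = (b.+1, t'.+1)
    & WSpec t'.+1 b.+1 r Wrest] ->
  WSpec t'.+1 p r (WR ++ Wrest).
Proof.
move=> br rL hrest.
have [WRne WRs [WRfc WRlc] [WRsort WRpw] WRinv] := WRspec.
have sitesWR : forall v, v \in WR -> [/\ wreal v.1, v.2 <= t'.+1, ~ good v.1 v.2,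
    p <= v.1 + (t'.+1 - v.2) & v.1 <= r + (t'.+1 - v.2)].
  move=> v vW; have [? ? ? c1 c2] := WRs v vW; split => //; lia.
have [w [WR' eW]] : exists w WR', WR = w :: WR'.
  by case: (WR) WRne => [//|w WR'] _; exists w, WR'.
have fc : wFC t'.+1 p (head (0,0) WR).
  have hw : head (0,0) WR \in WR by rewrite eW mem_head.
  have [rw _ _ _ _] := WRs _ hw.
  exact: (fc_up rw WRfc).
have invWR : forall pi, wLip t'.+1 pi ->
    (r <= pi t' -> forall v, v \in WR -> v.2 < t'.+1 -> v.1 < pi v.2) /\
    (pi t' <= p.+1 -> forall v, v \in WR -> v.2 < t'.+1 -> pi v.2 < v.1).
  move=> pi Lp; split => h.
    by apply: invR_up => //; lia.
  exact: invL_up.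
case: hrest => [[e [RB ->]] | [bltr alb hd [Rne Rs [Rfc Rlc] [Rsort Rpw] Rinv]]].
  rewrite cats0; split => //.
  - split => //; have hl : last (0,0) WR \in WR by rewrite eW /= mem_last.
    have [rl _ _ _ _] := WRs _ hl.
    exact: (lc_end e RB rl WRlc).
  - move=> pi _ Lp; exact: invWR.
case: Wrest hd Rne Rs Rfc Rlc Rsort Rpw Rinv => [//|z Z] /= hd _ Rs Rfc Rlc Rsort Rpw Rinv.
subst z.
split => //.
- by rewrite eW.
- move=> v; rewrite mem_cat => /orP [vW | vZ]; first exact: sitesWR.
  have [r1 r2 r3 r4 r5] := Rs v vZ; split => //; exact: leq_trans pb (ltnW r4).
- split; first by move: fc; rewrite eW.
  by rewrite last_cat /=; exact: Rlc.
- split.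
    rewrite eW /= cat_path; apply/andP; split; first by rewrite eW in WRsort.
    rewrite /=; apply/andP; split; last exact: Rsort.
    apply: (lc_mid (l := last w WR')) => //; first lia.
    by rewrite eW in WRlc.
  rewrite pairwise_cat; apply/and3P; split => //.
  apply/allrelP => u v uW vZ.
  have rb1 : wreal b.+1 by rewrite /wreal; lia.
  have [pi [Lp h1 h2]] := path_pi rb1 alb.
  rewrite /sameord; apply/implyP => /eqP e.
  have [_ u2 _ _ _] := WRs u uW.
  have hu : u.1 < pi u.2 by apply: (invR_up Lp) => //; lia.
  have [_ Rl] := Rinv pi (ltn0Sn _) Lp.
  have hv : pi v.2 < v.1 by apply: Rl => //; try lia; rewrite -e ltnS.
  rewrite e in hu; exact: ltn_trans hu hv.
- move=> pi _ Lp.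
  have [Rr Rl] := Rinv pi (ltn0Sn _) Lp.
  have [Wr Wl] := invWR pi Lp.
  split => h v; rewrite mem_cat => /orP [vW | vZ] hv.
  + by apply: Wr.
  + by apply: Rr.
  + by apply: Wl.
  + by apply: Rl => //=; move: h => /= h; lia.
Qed.

End Run.

Definition Seg t := forall p r, 0 < p -> p <= r -> r <= L ->
  (forall x, p <= x <= r -> ~ wop x t) -> (p = 1 \/ alive p.-1 t) ->
  (r = L \/ alive r.+1 t) -> exists W, WSpec t p r W.

Lemma notdead_alive x s : wreal x -> ~ wdead x s -> alive x s.
Proof. by move=> rx nd; apply: NNPP => na; apply: nd. Qed.

Lemma seg_step t : (forall t', t = t'.+1 -> Seg t') -> Seg t.
Proof.
move=> IHt p r p0 pr rL Z LB RB.
have := ltnSn (r - p); move: {2}(r - p).+1 => n.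
elim: n p p0 pr Z LB => [|n IHn] p p0 pr Z LB hn; first by [].
case: (classic (wdead p t)) => dp.
  have [b [hb hd hend]] := run_end pr dp.
  case: t IHt dp hd hend Z LB RB IHn => [|t'] IHt dp hd hend Z LB RB IHn.
    by case: dp => rp []; apply: H0.
  have St' := IHt t' erefl.
  have Zc : forall x, maxn 1 p.-1 <= x <= minn L b.+1 -> ~ wop x t'.
    move=> x hx.
    have [y [hy1 hy2 hy3]] : exists y, [/\ p <= y <= b, x <= y.+1 & y <= x.+1].
      case: (ltnP x p) => h1; first by exists p; split; lia.
      case: (ltnP b x) => h2; first by exists b; split; lia.
      by exists x; split; lia.
    exact: dead_cover (hd y hy1) hy2 hy3.
  have LB' : maxn 1 p.-1 = 1 \/ alive (maxn 1 p.-1).-1 t'.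
    case: (leqP p 2) => hp; first by left; lia.
    case: LB => [?|al]; first lia.
    have rp1 : wreal p.-1 by rewrite /wreal; lia.
    have [y [opy h1 h2]] := alive_nb rp1 al.
    have nh : ~ (maxn 1 p.-1 <= y <= minn L b.+1) by move=> hh; exact: Zc hh opy.
    have ry := op_real opy; move: ry; rewrite /wreal => ry.
    right; have -> : (maxn 1 p.-1).-1 = y.
      apply/eqP; apply: contraT => hne; exfalso; apply: nh; apply/andP; lia.
    by case: opy => _ [].
  have balive : b < L -> alive b.+1 t'.+1.
    move=> bL; case: hend => [br | [bltr ndb]].
      by case: RB => [?|]; [lia | rewrite br].
    by apply: notdead_alive => //; rewrite /wreal; lia.
  have RB' : minn L b.+1 = L \/ alive (minn L b.+1).+1 t'.
    case: (ltnP b L) => bL; last by left; lia.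
    have rb1 : wreal b.+1 by rewrite /wreal; lia.
    have [y [opy h1 h2]] := alive_nb rb1 (balive bL).
    have nh : ~ (maxn 1 p.-1 <= y <= minn L b.+1) by move=> hh; exact: Zc hh opy.
    have ry := op_real opy; move: ry; rewrite /wreal => ry.
    right; have -> : (minn L b.+1).+1 = y.
      apply/eqP; apply: contraT => hne; exfalso; apply: nh; apply/andP; lia.
    by case: opy => _ [].
  have [WR WRspec] := St' (maxn 1 p.-1) (minn L b.+1) ltac:(lia) ltac:(lia) ltac:(lia) Zc LB' RB'.
  case: hend => [br | [bltr ndb]].
    exists (WR ++ [::]); apply: (appendRun (t':=t') (p:=p) (b:=b)) => //; try lia.
    by left; split => //; split => //; rewrite -br.
  have alb := balive ltac:(lia).
  have rb1 : wreal b.+1 by rewrite /wreal; lia.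
  have gb : ~ good b.+1 t'.+1.
    move=> g; apply: (Z b.+1); [apply/andP; lia | split => //].
  have [W3 W3spec] : exists W3, WSpecE t'.+1 b.+2 r W3.
    case: (ltnP b.+1 r) => h.
      have [W3 W3s] := IHn b.+2 ltac:(lia) ltac:(lia)
        (fun x hx => Z x ltac:(lia)) (or_intror alb) ltac:(lia).
      by exists W3; right.
    by exists [::]; left; split => //; lia.
  have Rs := consBad (p:=b.+1) (ltn0Sn b) bltr rL alb gb W3spec.
  exists (WR ++ (b.+1, t'.+1) :: W3).
  apply: (appendRun (t':=t') (p:=p) (b:=b)) => //; try lia.
  by right; split.
have rp : wreal p by rewrite /wreal; lia.
have ap := notdead_alive rp dp.
have gp : ~ good p t by move=> g; apply: (Z p); [apply/andP; lia | split].
case: (ltnP p r) => h.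
  have [W' W's] := IHn p.+1 ltac:(lia) h (fun x hx => Z x ltac:(lia)) (or_intror ap) ltac:(lia).
  by exists ((p,t) :: W'); apply: consBad => //; right.
by exists [:: (p,t)]; apply: consBad => //; left; split => //; lia.
Qed.

Lemma seg_all t : Seg t.
Proof. by elim: t => [|t IH]; apply: seg_step => // t' [<-]. Qed.

Lemma witness T' : 0 < L -> (forall x, wreal x -> ~ alive x T'.+1) ->
  exists W : seq (nat * nat), [/\ W <> [::],
    (forall v, v \in W -> [/\ wreal v.1, v.2 <= T' & ~ good v.1 v.2]),
    (head (0,0) W).1 = 1 /\ (last (0,0) W).1 = L, sorted wlegal W & uniq W].
Proof.
move=> L0 hd.
have Z : forall x, 1 <= x <= L -> ~ wop x T'.
  move=> x hx; apply: (dead_cover (x:=x)) => //; split; [rewrite /wreal; lia| apply: hd; rewrite /wreal; lia].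
have [W [Wne Ws [Wfc Wlc] [Wsort Wpw] _]] := @seg_all T' 1 L isT L0 (leqnn L) Z (or_introl erefl) (or_introl erefl).
have hh : head (0,0) W \in W by case: (W) Wne => [//|w W'] _; exact: mem_head.
have hl : last (0,0) W \in W by case: (W) Wne => [//|w W'] _; by rewrite /= mem_last.
exists W; split => //.
- by move=> v vW; have [? ? ? _ _] := Ws v vW; split.
- split.
    have [rh _ _ _ _] := Ws _ hh; move: rh; rewrite /wreal.
    by case: Wfc => [|[]//]; rewrite /wlegal /=; lia.
  have [rh _ _ _ _] := Ws _ hl; move: rh; rewrite /wreal.
  by case: Wlc => [|[]//]; rewrite /wlegal /=; lia.
- apply: (pairwise_uniq (r := sameord)) => // x; rewrite /sameord eqxx /=; exact: ltnn.
Qed.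

End Witness.

Local Open Scope classical_set_scope.
Local Open Scope ring_scope.

Section Count.
Variable R : realFieldType.
Variables L T : nat.

Definition allsites := [seq (x, s) | x <- iota 1 L, s <- iota 0 T].
Definition nbrs v := [seq w <- allsites | wlegal v w].
Fixpoint wpaths n v : seq (seq (nat*nat)) :=
  match n with
  | 0 => [::]
  | n'.+1 => (if v.1 == L then [:: [:: v]] else [::]) ++
             [seq v :: sg | w <- nbrs v, sg <- wpaths n' w]
  end.

Lemma count_legal v x : (count (fun s => wlegal v (x, s)) (iota 0 T) <=
  (if x <= v.1.+1 then (2 * (v.1.+1 - x)).+1 else 0))%N.
Proof.
case: ifP => hx; last first.
  rewrite leqn0; apply/eqP/eqP; rewrite eqn0Ngt -has_count; apply/hasPn => s _.
  rewrite /wlegal /=; lia.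
set a := (v.1.+1 - x)%N.
rewrite -size_filter.
have -> : ((2 * a).+1 = size (iota (v.2 - a) (2 * a).+1))%N by rewrite size_iota.
apply: uniq_leq_size; first by apply: filter_uniq; exact: iota_uniq.
move=> s; rewrite mem_filter => /andP [hl _]; rewrite mem_iota.
move: hl; rewrite /wlegal /= /a; lia.
Qed.

Local Notation h := ((2 : R)^-1).

Lemma h_ge0 : 0 <= h. Proof. by rewrite invr_ge0. Qed.

Lemma G_bound c n : \sum_(x <- iota 1 n) (if (x <= c.+1)%N then h ^+ (c.+1 - x) else 0)
  <= 2 * h ^+ (c.+1 - n).
Proof.
elim: n => [|n IH]; first by rewrite big_nil mulr_ge0 // exprn_ge0 // h_ge0.
have -> : iota 1 n.+1 = iota 1 n ++ [:: n.+1] by have := iotaD 1 n 1; rewrite addn1 add1n => ->.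
rewrite big_cat big_seq1 /=.
case: ifP => hn.
  have e : (c.+1 - n = (c.+1 - n.+1).+1)%N by lia.
  rewrite e exprS in IH.
  apply: (le_trans (lerD IH (lexx _))).
  have : 0 <= h ^+ (c.+1 - n.+1) by rewrite exprn_ge0 // h_ge0.
  set X := h ^+ _; move=> hX.
  have -> : 2 * (h * X) = X by rewrite mulrA divff ?mul1r // pnatr_eq0.
  lra.
rewrite addr0.
have -> : (c.+1 - n.+1 = 0)%N by lia.
have e : (c.+1 - n = 0)%N by lia.
by rewrite e in IH.
Qed.

Lemma sum_if_const (r : seq nat) (P : pred nat) (c : R) :
  \sum_(s <- r) (if P s then c else 0) = (count P r)%:R * c.
Proof.
elim: r => [|s r IH]; first by rewrite big_nil mul0r.
rewrite big_cons IH /= natrD mulrDl; case: (P s) => /=; by rewrite ?mul1r ?mul0r ?add0r.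
Qed.

Lemma term_bound c x : (1 <= x)%N -> (x <= c.+1)%N -> (c <= L)%N ->
  ((2 * (c.+1 - x)).+1)%:R * h ^+ (2 * (L.+1 - x)) <=
  8 * h ^+ (2 * (L.+1 - c)) * h ^+ (c.+1 - x).
Proof.
move=> x1 xc cL.
set a := (c.+1 - x)%N; set k := (L.+1 - c)%N.
have e : (2 * (L.+1 - x) + 2 = 2 * k + (a + a))%N by rewrite /k /a; lia.
have hpos : 0 < h by rewrite invr_gt0.
have h2 : h ^+ 2 * 4 = 1.
  by rewrite expr2 -!mulrA (_ : 4 = 2 * 2) ?mulrA ?mulVf ?mul1r ?mulVf ?pnatr_eq0 //; lra.
have E : h ^+ (2 * (L.+1 - x)) = 4 * h ^+ (2 * k) * (h ^+ a * h ^+ a).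
  have E1 : h ^+ (2 * (L.+1 - x)) * h ^+ 2 = h ^+ (2 * k) * (h ^+ a * h ^+ a).
    by rewrite -!exprD e.
  by rewrite -mulrA -E1 mulrCA (mulrC 4) h2 mulr1.
have key : ((2 * a).+1)%:R * h ^+ a <= 2.
  rewrite exprVn (ler_pdivrMr _ _ (exprn_gt0 _ _)) //.
  rewrite -natrX -(natrM _ 2) ler_nat.
  have := ltn_expl a (isT : (1 < 2)%N); lia.
rewrite E.
have -> : ((2 * a).+1)%:R * (4 * h ^+ (2 * k) * (h ^+ a * h ^+ a)) =
  (4 * h ^+ (2 * k) * h ^+ a) * (((2 * a).+1)%:R * h ^+ a) by ring.
have -> : 8 * h ^+ (2 * k) * h ^+ a = (4 * h ^+ (2 * k) * h ^+ a) * 2 by ring.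
apply: ler_wpM2l => //; rewrite !mulr_ge0 // exprn_ge0 // h_ge0.
Qed.

Lemma nbrs_mem v w : w \in nbrs v -> [/\ (1 <= w.1 <= L)%N, (w.2 < T)%N & wlegal v w].
Proof.
rewrite mem_filter => /andP [lg /allpairsP [[x s] [/= xi si e]]].
rewrite e /=; rewrite e in lg; move: xi si; rewrite !mem_iota => xi si.
split => //; lia.
Qed.

Lemma nbrs_sum v : (v.1 <= L)%N ->
  \sum_(w <- nbrs v) h ^+ (2 * (L.+1 - w.1)) <= 16 * h ^+ (2 * (L.+1 - v.1)).
Proof.
move=> vL; rewrite big_filter big_mkcond big_allpairs /=.
set H := h ^+ (2 * (L.+1 - v.1)).
have H0 : 0 <= H by rewrite exprn_ge0 // h_ge0.
apply: (le_trans (y := \sum_(x <- iota 1 L)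
   (8 * H * (if (x <= v.1.+1)%N then h ^+ (v.1.+1 - x) else 0)))).
  rewrite big_seq [X in _ <= X]big_seq; apply: ler_sum => x xin.
  have x1 : (1 <= x)%N by move: xin; rewrite mem_iota; lia.
  rewrite (sum_if_const _ (fun s => wlegal v (x, s))).
  have := count_legal v x; case: ifP => hx hc.
    apply: le_trans (term_bound x1 hx vL).
    apply: ler_wpM2r; first by rewrite exprn_ge0 // h_ge0.
    by rewrite ler_nat.
  by move: hc; rewrite leqn0 => /eqP ->; rewrite mul0r mulr0.
rewrite -mulr_sumr.
have G := G_bound v.1 L.
have hk : h ^+ (v.1.+1 - L) <= 1 by rewrite exprn_ile1 // ?h_ge0 // invf_le1 ?ler1n.
have : \sum_(x <- iota 1 L) (if (x <= v.1.+1)%N then h ^+ (v.1.+1 - x) else 0) <= 2 by lra.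
move=> G2; nra.
Qed.

Lemma paths_bound n v : (v.1 <= L)%N ->
  \sum_(sg <- wpaths n v) (100^-1 : R) ^+ (size sg) <= 20^-1 * h ^+ (2 * (L.+1 - v.1)).
Proof.
elim: n v => [|n IH] v vL /=.
  by rewrite big_nil mulr_ge0 // ?invr_ge0 ?ler0n // exprn_ge0 // h_ge0.
rewrite big_cat big_allpairs_dep /=.
set H := h ^+ _.
have H0 : 0 <= H by rewrite exprn_ge0 // h_ge0.
have q0 : 0 <= (100^-1 : R) by rewrite invr_ge0 ler0n.
have B1 : \sum_(i <- (if v.1 == L then [:: [:: v]] else [::])) (100^-1 : R) ^+ (size i)
    <= 100^-1 * 4 * H.
  case: eqP => e; last by rewrite big_nil !mulr_ge0 // ler0n.
  rewrite big_seq1 /= expr1 /H e subSnn muln1.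
  by rewrite -mulrA; rewrite (_ : 4 * h ^+ 2 = 1) ?mulr1 //; rewrite expr2; field.
have B2 : \sum_(w <- nbrs v) \sum_(sg <- wpaths n w) (100^-1 : R) ^+ (size (v :: sg))
    <= 100^-1 * (20^-1 * (16 * H)).
  have -> : \sum_(w <- nbrs v) \sum_(sg <- wpaths n w) (100^-1 : R) ^+ (size (v :: sg)) =
      100^-1 * \sum_(w <- nbrs v) \sum_(sg <- wpaths n w) (100^-1 : R) ^+ (size sg).
    rewrite mulr_sumr; apply: eq_bigr => w _; rewrite mulr_sumr.
    by apply: eq_bigr => sg _; rewrite /= exprS.
  apply: ler_wpM2l => //.
  apply: (le_trans (y := \sum_(w <- nbrs v) 20^-1 * h ^+ (2 * (L.+1 - w.1)))).
    rewrite big_seq [X in _ <= X]big_seq; apply: ler_sum => w win.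
    have [w1 _ _] := nbrs_mem win.
    by apply: IH; case/andP: w1.
  rewrite -mulr_sumr; apply: ler_wpM2l; first by rewrite invr_ge0 ler0n.
  exact: nbrs_sum.
apply: (le_trans (lerD B1 B2)).
lra.
Qed.

Definition fam N := flatten [seq wpaths N (1, s) | s <- iota 0 T].

Lemma fam_sum N : (1 <= L)%N ->
  \sum_(sg <- fam N) (100^-1 : R) ^+ (size sg) <= T%:R * (20^-1 * h ^+ (2 * L)).
Proof.
move=> L1; rewrite big_flatten big_map.
apply: (le_trans (y := \sum_(s <- iota 0 T) (20^-1 * h ^+ (2 * L)))).
  apply: ler_sum => s _.
  by have := @paths_bound N (1, s) L1; rewrite /= subSS subn0.
by rewrite big_const_seq count_predT size_iota iter_addr_0 mulr_natl.
Qed.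

Lemma allsites_mem u : (1 <= u.1 <= L)%N -> (u.2 < T)%N -> u \in allsites.
Proof.
case: u => x s /= h1 h2; apply/allpairsP; exists (x, s); split => //=;
  rewrite mem_iota; lia.
Qed.

Lemma paths_mem n v W' : path wlegal v W' ->
  (forall u, u \in v :: W' -> u \in allsites) -> (last v W').1 = L ->
  (size W' < n)%N -> v :: W' \in wpaths n v.
Proof.
elim: W' v n => [|w W' IH] v [|n] //= hp hs hl hn.
  by rewrite mem_cat hl eqxx mem_seq1 eqxx.
rewrite mem_cat; apply/orP; right.
case/andP: hp => hvw hp.
apply/allpairsPdep; exists w, (w :: W'); split => //.
  by rewrite mem_filter hvw; apply: hs; rewrite !inE eqxx orbT.
apply: IH => //.
by move=> u hu; apply: hs; rewrite inE hu orbT.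
Qed.

Lemma size_allsites : size allsites = (L * T)%N.
Proof. by rewrite size_allpairs !size_iota. Qed.

End Count.

Lemma bigsetI_mem (T : Type) (I : eqType) (s : seq I) (F : I -> set T) (w : T) :
  (\big[setI/setT]_(k <- s) F k) w <-> (forall k, k \in s -> F k w).
Proof.
elim: s => [|k s IH]; first by rewrite big_nil; split.
rewrite big_cons; split.
  by case=> h1 /IH h2 k'; rewrite inE => /predU1P [->|/h2].
move=> h; split; first by apply: h; rewrite inE eqxx.
by apply/IH => k' hk; apply: h; rewrite inE hk orbT.
Qed.

Lemma bigsetU_mem (T : Type) (I : eqType) (s : seq I) (F : I -> set T) (w : T) :
  (\big[setU/set0]_(k <- s) F k) w <-> (exists k, k \in s /\ F k w).
Proof.
elim: s => [|k s IH]; first by rewrite big_nil; split => // [[k []]].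
rewrite big_cons; split.
  case=> [h|/IH [k' [h1 h2]]]; first by exists k; rewrite inE eqxx.
  by exists k'; rewrite inE h1 orbT.
case=> k' []; rewrite inE => /predU1P [->|h1] h2; first by left.
by right; apply/IH; exists k'.
Qed.

Section Indep.
Context d (T : measurableType d) (R : realType) (P : probability T R).
Variables (I : eqType) (A : I -> set T).
Hypothesis mA : forall i, measurable (A i).
Hypothesis hind : mutually_independent P A.

Lemma indep_compl (U S : seq I) : uniq (S ++ U) ->
  P (\big[setI/setT]_(k <- S) A k `&` \big[setI/setT]_(k <- U) ~` A k) =
  ((\prod_(k <- S) fine (P (A k))) * \prod_(k <- U) (1 - fine (P (A k))))%:E.
Proof.
elim: U S => [|u U IH] S hu.
  rewrite !big_nil setIT mulr1; apply: hind; by rewrite cats0 in hu.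
have hp : perm_eq (S ++ [:: u] ++ U) ([:: u] ++ S ++ U) by rewrite perm_catCA.
have hu' : uniq (u :: S ++ U) by rewrite -(perm_uniq hp).
have hSU : uniq (S ++ U) by case/andP: hu'.
set X := \big[setI/setT]_(k <- S) A k `&` \big[setI/setT]_(k <- U) ~` A k.
have mX : measurable X.
  apply: measurableI; apply: bigsetI_measurable => i _ //; exact: measurableC.
have eq1 : \big[setI/setT]_(k <- S) A k `&` \big[setI/setT]_(k <- u :: U) ~` A k
    = X `\` A u.
  by rewrite big_cons /X; apply/seteqP; split => w /=; tauto.
have eq2 : X `&` A u = \big[setI/setT]_(k <- u :: S) A k `&` \big[setI/setT]_(k <- U) ~` A k.
  by rewrite big_cons /X; apply/seteqP; split => w /=; tauto.
have Xfin : (P X < +oo)%E by apply: (le_lt_trans (probability_le1 P mX)); rewrite ltry.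
have eD : P (X `\` A u) = (P X - P (X `&` A u))%E by apply: measureD.
rewrite eq1 eD eq2 (IH (u :: S) hu') /X (IH S hSU).
rewrite -EFinB; congr EFin; rewrite !big_cons; ring.
Qed.

Lemma fine_bounds k : ((99/100 : R)%:E <= P (A k))%E ->
  99/100 <= fine (P (A k)) <= 1.
Proof.
move=> h; have h1 := probability_le1 P (mA k); move: h1 h.
by case: (P (A k)) => [r||] //=; rewrite !lee_fin => h1 h2; apply/andP.
Qed.

Lemma prob_all_bad (s : seq I) : uniq s ->
  (forall k, ((99/100 : R)%:E <= P (A k))%E) ->
  (P (\big[setI/setT]_(k <- s) ~` A k) <= ((100^-1 : R) ^+ size s)%:E)%E.
Proof.
move=> us h.
have := @indep_compl s [::] us; rewrite big_nil setTI big_nil mul1r => ->.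
rewrite lee_fin.
elim: s us => [|k s IH] /=; first by rewrite big_nil.
move=> /andP [_ us]; rewrite big_cons exprS.
have /andP [f1 f2] := fine_bounds (h k).
apply: ler_pM.
- lra.
- by apply: prodr_ge0 => i _; have /andP [g1 g2] := fine_bounds (h i); lra.
- lra.
- exact: IH.
Qed.

End Indep.

Section Iface.
Variables (n : nat) (T : Type) (A : 'I_n.+1 -> nat -> set T) (w : T).
Definition alv x s := incident A w (inord x.-1) s.
Definition gd x s := A (inord x.-1) s w.

Lemma iface_step x s : wreal n.+1 x -> alv x s.+1 <->
  exists y, [/\ wreal n.+1 y, (y <= x.+1)%N, (x <= y.+1)%N, alv y s & gd y s].
Proof.
rewrite /wreal => /andP [x1 x2]; split.
  rewrite /alv /= => -[i' [hn [hi ha]]]; exists i'.+1.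
  have hi' := ltn_ord i'.
  move: hn; rewrite /near1 inordK; last by lia.
  move=> /andP [n1 n2]; split; rewrite ?/wreal; try lia.
    by rewrite /alv /= inord_val.
  by rewrite /gd /= inord_val.
case=> y [ry h1 h2 ay gy]; exists (inord y.-1); split => //.
move: ry; rewrite /wreal /near1 => ry; rewrite !inordK; lia.
Qed.

Lemma extinct_witness T' : (1 < n.+1)%N ->
  (forall i : 'I_n.+1, ~ incident A w i T'.+1) ->
  exists W : seq (nat * nat), [/\ W <> [::],
    (forall v, v \in W -> [/\ wreal n.+1 v.1, (v.2 <= T')%N & ~ gd v.1 v.2]),
    (head (0,0) W).1 = 1%N /\ (last (0,0) W).1 = n.+1, sorted wlegal W & uniq W].
Proof.
move=> Ln hd.
have H0' : forall x, wreal n.+1 x -> alv x 0 by move=> x _; rewrite /alv.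
exact: (witness H0' (@iface_step) (ltn0Sn n) (fun x _ => hd _)).
Qed.

End Iface.

Section Reach.
Variables (R : realType) (T : Type) (L : nat) (A : 'I_L -> nat -> set T).

Lemma inc_path w i t : incident A w i t -> exists (x : vertex L) (s : seq (vertex L)),
  [/\ x.2 = 0%N, last x s = (i, t) &
     forall k, (k < size s)%N -> open_edge A w (nth x (x :: s) k) (nth x s k)].
Proof.
elim: t i => [|t IH] i hi.
  by exists (i, 0%N), [::]; split.
move: hi => /= [i' [hn [hi' ha]]].
have [x [s [hx hl he]]] := IH i' hi'.
exists x, (rcons s (i, t.+1)); split => //; first by rewrite last_rcons.
move=> k; rewrite size_rcons ltnS leq_eqVlt => /orP [/eqP ->|hk].
  rewrite nth_rcons ltnn eqxx -rcons_cons nth_rcons /= ltnSn.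
  have -> : nth x (x :: s) (size s) = last x s by rewrite nth_last.
  rewrite hl; right; left; split => //.
rewrite nth_rcons hk -rcons_cons nth_rcons /= ltnS (ltnW hk).
exact: he.
Qed.

Lemma reachesE : @reaches R T L A =
  \bigcup_(t in [set t : nat | (101/100 : R) ^+ L <= t%:R])
     [set w | exists i, incident A w i t].
Proof.
apply/seteqP; split => w.
  move=> [x [s [hx [hc he]]]].
  have cpos : 0 < (101/100 : R) ^+ L by rewrite exprn_gt0.
  case: s he hc => [|v s] he hc.
    by rewrite /= hx in hc; have := lt_le_trans cpos hc; rewrite ltr0n.
  set u := nth x (x :: v :: s) (size s).
  have hv : nth x (v :: s) (size s) = last x (v :: s) by rewrite -nth_last.
  have := he (size s) (ltnSn _); rewrite hv.
  set z := last x (v :: s) in hc *.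
  case=> [[_ [hz _]]|[[hz [hn [hi ha]]]|[hz [hn [hi ha]]]]].
  - by rewrite hz in hc; have := lt_le_trans cpos hc; rewrite ltr0n.
  - exists z.2 => //; exists z.1; rewrite hz /=; exists u.1; split => //.
  - by exists z.2 => //; exists z.1.
move=> [t /= ht [i hi]].
have [x [s [hx hl he]]] := inc_path hi.
by exists x, s; split => //; rewrite hl.
Qed.

End Reach.

Section Main.
Context d (T : measurableType d) (R : realType) (P : probability T R).
Variables (n : nat) (A : 'I_n.+1 -> nat -> set T).
Hypothesis mA : forall i t, measurable (A i t).

Lemma meas_const (Q : Prop) : measurable [set _ : T | Q].
Proof.
case: (pselect Q) => hQ.
  by have -> : [set _ : T | Q] = setT by apply/seteqP; split.
by have -> : [set _ : T | Q] = set0 by apply/seteqP; split.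
Qed.

Lemma meas_inc i t : measurable [set w | incident A w i t].
Proof.
elim: t i => [|t IH] i /=; first exact: meas_const.
have -> : [set w | exists i', near1 i' i /\ incident A w i' t /\ A i' t w] =
    \big[setU/set0]_(i' <- [seq j <- enum 'I_n.+1 | near1 j i])
      ([set w | incident A w i' t] `&` A i' t).
  apply/seteqP; split => w.
    move=> [i' [hn [hi ha]]]; apply/bigsetU_mem; exists i'; split => //.
    by rewrite mem_filter hn mem_enum.
  move=> /bigsetU_mem [i' [hi' [h1 h2]]]; exists i'.
  by move: hi'; rewrite mem_filter => /andP [hn _].
by apply: bigsetU_measurable => i' _; apply: measurableI => //; exact: IH.
Qed.

Lemma meas_E t : measurable [set w | exists i, incident A w i t].
Proof.
have -> : [set w | exists i, incident A w i t] =
    \big[setU/set0]_(i <- enum 'I_n.+1) [set w | incident A w i t].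
  apply/seteqP; split => w.
    by move=> [i hi]; apply/bigsetU_mem; exists i; rewrite mem_enum.
  by move=> /bigsetU_mem [i [_ hi]]; exists i.
by apply: bigsetU_measurable => i _; exact: meas_inc.
Qed.

Lemma meas_reach : measurable (@reaches R T n.+1 A).
Proof. by rewrite reachesE; apply: bigcup_measurable => t _; exact: meas_E. Qed.

End Main.

Section MainBound.
Context d (T : measurableType d) (R : realType) (P : probability T R).
Variables (n : nat) (A : 'I_n.+1 -> nat -> set T).
Hypothesis mA : forall i t, measurable (A i t).
Hypothesis hind : mutually_independent P (fun it : vertex n.+1 => A it.1 it.2).
Hypothesis hp : forall i t, ((99/100 : R)%:E <= P (A i t))%E.
Hypothesis Ln : (1 < n.+1)%N.

Let TT := (2 ^ n.+1)%N.
Let NN := (n.+1 * TT)%N.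
Definition fv (v : nat * nat) : vertex n.+1 := (inord v.1.-1, v.2).
Definition Ev (sg : seq (nat * nat)) : set T :=
  \big[setI/setT]_(k <- map fv sg) ~` A k.1 k.2.
Let FF := [seq sg <- fam n.+1 TT NN | uniq (map fv sg)].
Let E := [set w | exists i, incident A w i TT].

Lemma notE_sub : ~` E `<=` \big[setU/set0]_(i < size FF) Ev (nth [::] FF i).
Proof.
move=> w /= hE.
have TTS : TT = TT.-1.+1 by rewrite prednK // expn_gt0.
have hd : forall i, ~ incident A w i TT.-1.+1.
  by move=> i hi; apply: hE; exists i; rewrite TTS.
have [W [Wne Ws [Wh Wl] Wsort Wu]] := extinct_witness Ln hd.
have Wall : forall u, u \in W -> u \in allsites n.+1 TT.
  move=> u uW; have [ru u2 _] := Ws u uW; apply: allsites_mem => //.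
  by move: u2; rewrite -ltnS -TTS.
have Wsz : (size W <= NN)%N.
  by have := uniq_leq_size Wu Wall; rewrite size_allsites.
case: W Wne Ws Wh Wl Wsort Wu Wall Wsz => [//|v W'] _ Ws Wh Wl Wsort Wu Wall Wsz.
have Win : v :: W' \in FF.
  rewrite mem_filter; apply/andP; split.
    rewrite map_inj_in_uniq // => a b aW bW [e1 e2].
    have [ra _ _] := Ws a aW; have [rb _ _] := Ws b bW.
    move: ra rb e1 e2; rewrite /wreal.
    case: a {aW} => a1 a2; case: b {bW} => b1 b2 /= ra rb e1 e2.
    move/(congr1 (@nat_of_ord _)): e1; rewrite !inordK; try lia.
    move=> e; congr (_, _) => //; lia.
  apply/flatten_mapP; exists v.2.
    have [_ v2 _] := Ws v (mem_head _ _); rewrite mem_iota add0n /=; move: v2; by rewrite -ltnS -TTS.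
  have ev : (1%N, v.2) = v by move: Wh; clear; case: v => v1 v2 /= ->.
  rewrite /= ev.
  by apply: paths_mem => //; rewrite /= in Wsz.
have [i [hi1 hi2]] : exists i, (i < size FF)%N /\ nth [::] FF i = v :: W'.
  by exists (index (v :: W') FF); rewrite index_mem nth_index.
apply: (bigsetU_sup (F := fun i => Ev (nth [::] FF i)) hi1); rewrite hi2 /Ev; apply/bigsetI_mem => k /mapP [u uW ->] /=.
by have [_ _ gu] := Ws u uW.
Qed.

Lemma Ev_meas sg : measurable (Ev sg).
Proof. by apply: bigsetI_measurable => k _; apply: measurableC. Qed.

Lemma PnotE : (P (~` E) <= (20^-1 * (2^-1) ^+ n.+1 : R)%:E)%E.
Proof.
have mE : measurable E by exact: meas_E.
have mU : measurable (\big[setU/set0]_(i < size FF) Ev (nth [::] FF i)).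
  by apply: bigsetU_measurable => i _; exact: Ev_meas.
apply: (le_trans (le_measure _ _ _ notE_sub)); rewrite ?inE //; first exact: measurableC.
apply: le_trans.
  apply: (@Boole_inequality _ _ _ P (fun i => Ev (nth [::] FF i)) (size FF)).
  by move=> i _; exact: Ev_meas.
apply: (le_trans (y := \sum_(i < size FF)
   ((100^-1 : R) ^+ size (nth [::] FF i))%:E)).
  apply: lee_sum => i _.
  have hin : nth [::] FF i \in FF by apply: mem_nth.
  move: hin; rewrite mem_filter => /andP [hu _].
  have := @prob_all_bad d T R P (vertex n.+1) (fun it => A it.1 it.2)
    (fun it => mA it.1 it.2) hind _ hu (fun k => hp k.1 k.2).
  by rewrite size_map.
rewrite sumEFin lee_fin.
have e : \sum_(i < size FF) (100^-1 : R) ^+ size (nth [::] FF i) =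
  \sum_(sg <- FF) (100^-1 : R) ^+ size sg by rewrite (big_nth [::]) big_mkord.
rewrite e.
apply: (le_trans (y := \sum_(sg <- fam n.+1 TT NN) (100^-1 : R) ^+ size sg)).
  rewrite big_filter big_mkcond; apply: ler_sum => sg _.
  by case: ifP => _ //; rewrite exprn_ge0 // invr_ge0 ler0n.
apply: (le_trans (@fam_sum R n.+1 TT NN (ltn0Sn n))).
rewrite /TT natrX.
have -> : (2 * n.+1)%N = (n.+1 + n.+1)%N by rewrite mul2n addnn.
have e2 : (2:R) ^+ n.+1 * (2^-1) ^+ n.+1 = 1 by rewrite -exprMn mulfV ?pnatr_eq0 // expr1n.
rewrite exprD.
have -> : (2:R) ^+ n.+1 * (20^-1 * ((2^-1) ^+ n.+1 * (2^-1) ^+ n.+1)) =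
  20^-1 * (((2:R) ^+ n.+1 * (2^-1) ^+ n.+1) * (2^-1) ^+ n.+1) by ring.
by rewrite e2 mul1r.
Qed.

Lemma main_bound : ((1 - 20^-1 * (2^-1) ^+ n.+1 : R)%:E <= P (@reaches R T n.+1 A))%E.
Proof.
have mE : measurable E by exact: meas_E.
have sub : E `<=` @reaches R T n.+1 A.
  move=> w hw; rewrite reachesE; exists TT => //=.
  rewrite /TT natrX; apply: lerXn2r; rewrite ?nnegrE; lra.
have hc := probability_setC P mE.
have h1 := probability_le1 P mE.
have h0 := measure_ge0 P E.
have key : ((1 - 20^-1 * (2^-1) ^+ n.+1 : R)%:E <= P E)%E.
  have := PnotE; rewrite hc.
  move: h1 h0; case: (P E) => [r||] //=; rewrite ?lee_fin => h1 h0.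
  by move=> h; lra.
apply: (le_trans key); apply: le_measure; rewrite ?inE //; exact: meas_reach.
Qed.

End MainBound.

Theorem lemma4p5 (R : realType) (eps : R) (heps : 0 < eps) :
  exists L0 : nat, forall L : nat, (L0 <= L)%N ->
  forall (d : measure_display) (T : measurableType d) (P : probability T R)
         (A : 'I_L -> nat -> set T),
    (forall i t, measurable (A i t)) ->
    mutually_independent P (fun it : vertex L => A it.1 it.2) ->
    (forall i t, ((99 / 100 : R)%:E <= P (A i t))%E) ->
    ((1 - eps)%:E <= P (@reaches R T L A))%E.
Proof.
have ei : 0 <= eps^-1 by rewrite invr_ge0 ltW.
have hb := archi_boundP ei.
exists (maxn 2 (Num.Def.archi_bound eps^-1)).
case=> [|n] hL d T P A mA hind hp; first by lia.
have Ln : (1 < n.+1)%N by lia.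
apply: (le_trans _ (main_bound mA hind hp Ln)).
rewrite lee_fin.
have X0 : 0 <= (2^-1 : R) ^+ n.+1 by rewrite exprn_ge0 // invr_ge0.
suff : (2^-1 : R) ^+ n.+1 <= eps by move=> h; lra.
rewrite exprVn -natrX.
have h2 := ltn_expl n.+1 (isT : (1 < 2)%N).
have hY : eps^-1 < (2 ^ n.+1)%:R.
  by apply: (lt_le_trans hb); rewrite ler_nat; lia.
have Ypos : 0 < ((2 ^ n.+1)%N%:R : R) by rewrite ltr0n expn_gt0.
rewrite -[eps in _ <= eps]invrK lef_pV2 ?posrE ?invr_gt0 //.
exact: ltW.
Qed.
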